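(* Let $G$ be a group with a BN-pair $(B,N)$ carrying two group topologies $\mathcal{S}\subseteq\mathcal{T}$, and suppose $B\in\mathcal{S}$ (i.e. $B$ is $\mathcal{S}$-open). Let $\widehat{\mathrm{Id}}:\widehat{(G,\mathcal{T})}\to\widehat{(G,\mathcal{S})}$ be the unique continuous extension of the identity, and $\widehat{\mathrm{Id}_B}:\widehat{(B,\mathcal{T}_B)}\to\widehat{(B,\mathcal{S}_B)}$ the analogous map for the restricted topologies on $B$. Then $\ker\widehat{\mathrm{Id}}=\ker\widehat{\mathrm{Id}_B}$.
   Context: Completions are right uniform completions (minimal Cauchy filters), which are monoids; the kernel of a monoid homomorphism means the preimage of $1$. $\mathcal{T}_B,\mathcal{S}_B$ are the subspace topologies on $B$, and $\widehat{(B,\mathcal{T}_B)}$ is identified with the closure of $B$ in $\widehat{(G,\mathcal{T})}$. *)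

(* Defs.v *)
Set Implicit Arguments.
Unset Strict Implicit.

Definition set (X : Type) := X -> Prop.
Definition filt (X : Type) := set (set X).

Record gops := Gops {
  car :> Type;
  mul : car -> car -> car;
  inv : car -> car;
  one : car }.

Definition is_group (g : gops) : Prop :=
  (forall x y z : g, mul x (mul y z) = mul (mul x y) z) /\
  (forall x : g, mul (one g) x = x) /\
  (forall x : g, mul (inv x) x = one g).

Record is_subgroup (g : gops) (H : set g) : Prop := {
  sg_one : H (one g);
  sg_mul : forall x y, H x -> H y -> H (mul x y);
  sg_inv : forall x, H x -> H (inv x) }.

Definition generated (g : gops) (A : set g) : set g :=
  fun x => forall H, @is_subgroup g H -> (forall y, A y -> H y) -> H x.

Definition sub_gops (g : gops) (H : set g) (HH : @is_subgroup g H) : gops :=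
  @Gops {x : g | H x}
    (fun x y => exist _ (mul (proj1_sig x) (proj1_sig y))
                  (sg_mul HH (proj2_sig x) (proj2_sig y)))
    (fun x => exist _ (inv (proj1_sig x)) (sg_inv HH (proj2_sig x)))
    (exist _ (one g) (sg_one HH)).

(* BN-pair (Tits system).  T := B ∩ N, W := N/T; the generating set of
   involutions of W is given by a set S of representatives in N. *)
Record BN_pair (g : gops) (B N : set g) : Prop := {
  bn_B : @is_subgroup g B;
  bn_N : @is_subgroup g N;
  bn_gen : forall x, generated (fun y => B y \/ N y) x;
  bn_T_normal : forall n t, N n -> B t -> N t ->
      B (mul (mul n t) (inv n)) /\ N (mul (mul n t) (inv n));
  bn_S : exists S : set g,
      (* elements of S map to involutions of W = N/T *)
      (forall s, S s -> N s /\ ~ (B s /\ N s) /\ B (mul s s) /\ N (mul s s)) /\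
      (* W is generated by the image of S, i.e. N = <T ∪ S> *)
      (forall n, N n -> generated (fun y => (B y /\ N y) \/ S y) n) /\
      (* s B w ⊆ B w B ∪ B s w B *)
      (forall s n b, S s -> N n -> B b ->
         (exists b1 b2, B b1 /\ B b2 /\
             mul (mul s b) n = mul (mul b1 n) b2) \/
         (exists b1 b2, B b1 /\ B b2 /\
             mul (mul s b) n = mul (mul b1 (mul s n)) b2)) /\
      (forall s, S s ->
         ~ (forall x, B x <-> exists b, B b /\ x = mul (mul s b) s)) }.

Definition is_topology (X : Type) (tau : set (set X)) : Prop :=
  tau (fun _ => True) /\
  (forall (I : Type) (U : I -> set X), (forall i, tau (U i)) ->
      tau (fun x => exists i, U i x)) /\
  (forall U V, tau U -> tau V -> tau (fun x => U x /\ V x)).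

Definition is_group_topology (g : gops) (tau : set (set g)) : Prop :=
  is_topology tau /\
  (forall (x y : g) O, tau O -> O (mul x y) ->
     exists U V, tau U /\ tau V /\ U x /\ V y /\
       forall u v, U u -> V v -> O (mul u v)) /\
  (forall (x : g) O, tau O -> O (inv x) ->
     exists U, tau U /\ U x /\ forall u, U u -> O (inv u)).

Definition sub_top (g : gops) (H : set g) (HH : @is_subgroup g H)
  (tau : set (set g)) : set (set (sub_gops HH)) :=
  fun P => exists O, tau O /\ forall x : sub_gops HH, P x <-> O (proj1_sig x).

Definition nbhd (g : gops) (tau : set (set g)) (x : g) : filt g :=
  fun U => exists O, tau O /\ O x /\ forall y, O y -> U y.

Definition is_filter (X : Type) (F : filt X) : Prop :=
  F (fun _ => True) /\ ~ F (fun _ => False) /\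
  (forall U V, F U -> (forall x, U x -> V x) -> F V) /\
  (forall U V, F U -> F V -> F (fun x => U x /\ V x)).

(* A is small of order V for the right uniformity:
   entourages {(x,y) | y x^-1 ∈ V}, V a neighbourhood of 1 *)
Definition small (g : gops) (V A : set g) : Prop :=
  forall x y, A x -> A y -> V (mul y (inv x)).

Definition cauchy (g : gops) (tau : set (set g)) (F : filt g) : Prop :=
  is_filter F /\
  forall V, nbhd tau (one g) V -> exists A, F A /\ small V A.

(* points of the (right) completion: minimal Cauchy filters *)
Definition min_cauchy (g : gops) (tau : set (set g)) (F : filt g) : Prop :=
  cauchy tau F /\
  forall F', cauchy tau F' -> (forall U, F' U -> F U) -> forall U, F U -> F' U.

Definition feq (X : Type) (F F' : filt X) : Prop := forall U, F U <-> F' U.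

(* the entourage of the completion induced by V *)
Definition compl_ent (g : gops) (V : set g) (F F' : filt g) : Prop :=
  exists A, F A /\ F' A /\ small V A.

(* phi : completion of (g,tau) -> completion of (h,sigma) is a continuous
   extension of f : g -> h (the canonical image of x being the
   neighbourhood filter of x) *)
Definition is_cont_ext (g h : gops) (tau : set (set g)) (sigma : set (set h))
  (f : g -> h) (phi : filt g -> filt h) : Prop :=
  (forall F, min_cauchy tau F -> min_cauchy sigma (phi F)) /\
  (forall F, min_cauchy tau F ->
     forall W, nbhd sigma (one h) W ->
       exists V, nbhd tau (one g) V /\
         forall F', min_cauchy tau F' -> compl_ent V F F' ->
           compl_ent W (phi F) (phi F')) /\
  (forall x : g, feq (phi (nbhd tau x)) (nbhd sigma (f x))).

(* kernel: preimage of the unit (= neighbourhood filter of 1) *)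
Definition ker (g h : gops) (tau : set (set g)) (sigma : set (set h))
  (phi : filt g -> filt h) (F : filt g) : Prop :=
  min_cauchy tau F /\ feq (phi F) (nbhd sigma (one h)).

(* Main.v *)
Require Import Defs.
From Stdlib Require Import FunctionalExtensionality PropExtensionality ProofIrrelevance Classical.
Set Implicit Arguments.
Unset Strict Implicit.

Lemma feq_eq (X : Type) (F F' : filt X) : feq F F' -> F = F'.
Proof. intro H. apply functional_extensionality; intro U. apply propositional_extensionality. apply H. Qed.

Lemma g_assoc (g : gops) (HG : is_group g) (x y z : g) : mul x (mul y z) = mul (mul x y) z.
Proof. apply HG. Qed.
Lemma g_1l (g : gops) (HG : is_group g) (x : g) : mul (one g) x = x.
Proof. apply HG. Qed.
Lemma g_Vl g (HG : is_group g) (x : g) : mul (inv x) x = one g.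
Proof. apply HG. Qed.
Lemma g_Vr g (HG : is_group g) (x : g) : mul x (inv x) = one g.
Proof.
  transitivity (mul (mul (inv (inv x)) (inv x)) (mul x (inv x))).
  { rewrite (g_Vl HG). rewrite (g_1l HG). reflexivity. }
  rewrite <- (g_assoc HG). rewrite (g_assoc HG (inv x) x (inv x)).
  rewrite (g_Vl HG), (g_1l HG). apply (g_Vl HG).
Qed.
Lemma g_1r (g : gops) (HG : is_group g) (x : g) : mul x (one g) = x.
Proof. rewrite <- (g_Vl HG x). rewrite (g_assoc HG), (g_Vr HG), (g_1l HG). reflexivity. Qed.
Lemma g_inv_uniq (g : gops) (HG : is_group g) (a z : g) : mul a z = one g -> a = inv z.
Proof.
  intro H. rewrite <- (g_1r HG a). rewrite <- (g_Vr HG z). rewrite (g_assoc HG), H, (g_1l HG). reflexivity.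
Qed.
Lemma g_invM g (HG : is_group g) (x y : g) : inv (mul x y) = mul (inv y) (inv x).
Proof.
  symmetry. apply (g_inv_uniq HG). rewrite <- (g_assoc HG). rewrite (g_assoc HG (inv x)).
  rewrite (g_Vl HG), (g_1l HG). apply (g_Vl HG).
Qed.
Lemma g_inv1 (g : gops) (HG : is_group g) : inv (one g) = one g.
Proof. rewrite <- (g_1r HG (inv (one g))). apply (g_Vl HG). Qed.

Lemma alg1 (g : gops) (HG : is_group g) (x y z : g) :
  mul (mul y (inv z)) (mul z (inv x)) = mul y (inv x).
Proof. rewrite <- (g_assoc HG). rewrite (g_assoc HG (inv z)), (g_Vl HG), (g_1l HG). reflexivity. Qed.

Lemma alg2 (g : gops) (HG : is_group g) (y2 a2 a1 y1 : g) :
  mul (mul (mul y2 (inv a2)) (mul a2 (inv a1))) (inv (mul y1 (inv a1))) = mul y2 (inv y1).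
Proof.
  rewrite (alg1 HG). rewrite (g_invM HG). rewrite <- (g_assoc HG).
  rewrite (g_assoc HG (inv a1)).
  assert (E: inv (inv a1) = a1). { symmetry. apply (g_inv_uniq HG). apply (g_Vr HG). }
  rewrite E, (g_Vl HG), (g_1l HG). reflexivity.
Qed.

Lemma nbhd_pt (g : gops) (tau : set (set g)) x U : nbhd tau x U -> U x.
Proof. intros [O [_ [Ox H]]]. auto. Qed.

Lemma nbhd_mono (g : gops) (tau : set (set g)) x U V : nbhd tau x U -> (forall y, U y -> V y) -> nbhd tau x V.
Proof. intros [O [HO [Ox H]]] HUV. exists O. auto. Qed.

Lemma trans_open (g : gops) (tau : set (set g)) (Ht : is_group_topology tau) (O : set g) (c : g) :
  tau O -> tau (fun y => O (mul y c)).
Proof.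
  intro HO. destruct Ht as [[Htop [Hun Hint]] [Hmul Hinv]].
  set (I := {U : set g | tau U /\ forall u, U u -> O (mul u c)}).
  assert (E: (fun y => O (mul y c)) = (fun y => exists i : I, proj1_sig i y)).
  { apply functional_extensionality; intro y; apply propositional_extensionality; split.
    - intro Hy. destruct (Hmul y c O HO Hy) as [U [V [HU [HV [Uy [Vc HUV]]]]]].
      exists (exist (fun U => tau U /\ forall u, U u -> O (mul u c)) U
                (conj HU (fun u Hu => HUV u c Hu Vc))). simpl. exact Uy.
    - intros [[U [HU HU']] Uy]. simpl in Uy. auto. }
  rewrite E. apply Hun. intro i. destruct i as [U HU]. simpl. apply HU.
Qed.

Lemma nbhd_inter (g : gops) (tau : set (set g)) (Ht : is_group_topology tau) x U V :
  nbhd tau x U -> nbhd tau x V -> nbhd tau x (fun y => U y /\ V y).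
Proof.
  intros [O1 [H1 [O1x HO1]]] [O2 [H2 [O2x HO2]]].
  exists (fun y => O1 y /\ O2 y). split. apply Ht; auto. split; auto.
  intros y [? ?]; auto.
Qed.

Lemma nbhd_mul (g : gops) (HG : is_group g) (tau : set (set g)) (Ht : is_group_topology tau) W :
  nbhd tau (one g) W -> exists W1, nbhd tau (one g) W1 /\
     forall a b, W1 a -> W1 b -> W (mul a b).
Proof.
  intros [O [HO [O1 HOW]]]. destruct Ht as [Htop [Hmul Hinv]].
  destruct (Hmul (one g) (one g) O HO) as [U [V [HU [HV [U1 [V1 HUV]]]]]].
  { rewrite (g_1l HG). exact O1. }
  exists (fun y => U y /\ V y). split.
  - exists (fun y => U y /\ V y). split. apply Htop; auto. split; auto.
  - intros a b [? ?] [? ?]. auto.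
Qed.

Lemma nbhd_inv (g : gops) (HG : is_group g) (tau : set (set g)) (Ht : is_group_topology tau) W :
  nbhd tau (one g) W -> exists W1, nbhd tau (one g) W1 /\ forall a, W1 a -> W (inv a).
Proof.
  intros [O [HO [O1 HOW]]]. destruct Ht as [Htop [Hmul Hinv]].
  destruct (Hinv (one g) O HO) as [U [HU [U1 HU']]].
  { rewrite (g_inv1 HG). exact O1. }
  exists U. split. exists U. auto. auto.
Qed.

Lemma nbhd_mul3 (g : gops) (HG : is_group g) (tau : set (set g)) (Ht : is_group_topology tau) W :
  nbhd tau (one g) W -> exists W1, nbhd tau (one g) W1 /\
     forall a b c, W1 a -> W1 b -> W1 c -> W (mul (mul a b) (inv c)).
Proof.
  intro HW. destruct (nbhd_mul HG Ht HW) as [Wa [HWa Ha]].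
  destruct (nbhd_mul HG Ht HWa) as [Wb [HWb Hb]].
  destruct (nbhd_inv HG Ht HWa) as [Wc [HWc Hc]].
  exists (fun y => Wb y /\ Wc y). split. apply nbhd_inter; auto.
  intros a b c [? ?] [? ?] [? ?]. apply Ha; auto.
Qed.

Lemma filter_ne X (F : filt X) A : is_filter F -> F A -> exists x, A x.
Proof.
  intros [_ [Hb [Hm _]]] HA. apply NNPP. intro Hn. apply Hb.
  apply (Hm A); auto. intros x Ax. apply Hn. exists x; auto.
Qed.

Lemma ce_sym (g : gops) (V : set g) F F' : compl_ent V F F' -> compl_ent V F' F.
Proof. intros [A [? [? ?]]]. exists A. auto. Qed.

Lemma ce_trans (g : gops) (HG : is_group g) (W W1 : set g) (F G K : filt g) :
  W1 (one g) -> (forall a b, W1 a -> W1 b -> W (mul a b)) ->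
  is_filter F -> is_filter G -> is_filter K ->
  compl_ent W1 F G -> compl_ent W1 G K -> compl_ent W F K.
Proof.
  intros H1 HW HF HGf HK [A1 [FA1 [GA1 S1]]] [A2 [GA2 [KA2 S2]]].
  destruct (filter_ne HGf (proj2 (proj2 (proj2 HGf)) _ _ GA1 GA2)) as [z [z1 z2]].
  exists (fun x => A1 x \/ A2 x). split; [|split].
  - apply (proj1 (proj2 (proj2 HF)) A1); auto.
  - apply (proj1 (proj2 (proj2 HK)) A2); auto.
  - intros x y [Hx|Hx] [Hy|Hy].
    + rewrite <- (g_1r HG (mul y (inv x))). apply HW; auto.
    + rewrite <- (alg1 HG x y z). apply HW; auto.
    + rewrite <- (alg1 HG x y z). apply HW; auto.
    + rewrite <- (g_1r HG (mul y (inv x))). apply HW; auto.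
Qed.

Lemma approx (g : gops) (HG : is_group g) (tau : set (set g)) (Ht : is_group_topology tau)
  (F : filt g) V :
  cauchy tau F -> nbhd tau (one g) V ->
  exists A, F A /\ forall x, A x -> compl_ent V F (nbhd tau x).
Proof.
  intros [HF HC] HV. destruct (nbhd_mul3 HG Ht HV) as [W1 [HW1 H3]].
  destruct (HC W1 HW1) as [A [FA SA]].
  destruct HW1 as [O [HO [O1 HOW]]].
  exists A. split; auto. intros x Ax.
  exists (fun y => exists a, A a /\ O (mul y (inv a))). split; [|split].
  - apply (proj1 (proj2 (proj2 HF)) A); auto. intros a Aa. exists a. split; auto.
    rewrite (g_Vr HG). exact O1.
  - exists (fun y => O (mul y (inv x))). split. apply trans_open; auto.
    split. rewrite (g_Vr HG); auto. intros y Hy. exists x. auto.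
  - intros y1 y2 [a1 [A1 O1']] [a2 [A2 O2']].
    rewrite <- (alg2 HG y2 a2 a1 y1). apply H3; auto.
Qed.

Lemma nbhd_mc (g : gops) (HG : is_group g) (tau : set (set g)) (Ht : is_group_topology tau) x :
  min_cauchy tau (nbhd tau x).
Proof.
  assert (HF : is_filter (nbhd tau x)).
  { split; [|split; [|split]].
    - exists (fun _ => True). split. apply Ht. auto.
    - intro H. exact (nbhd_pt H).
    - intros; eapply nbhd_mono; eauto.
    - intros; apply nbhd_inter; auto. }
  split. split. exact HF.
  - intros V HV. destruct (nbhd_mul3 HG Ht HV) as [W1 [HW1 H3]].
    destruct HW1 as [O [HO [O1 HOW]]].
    exists (fun y => O (mul y (inv x))). split.
    + exists (fun y => O (mul y (inv x))). split. apply trans_open; auto.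
      split. rewrite (g_Vr HG); auto. auto.
    + intros y1 y2 H1 H2.
      replace (mul y2 (inv y1)) with (mul (mul (mul y2 (inv x)) (one g)) (inv (mul y1 (inv x)))).
      apply H3; auto.
      rewrite <- (alg2 HG y2 x x y1). rewrite (g_Vr HG). reflexivity.
  - intros F' [HF' HC'] Hsub U HU.
    destruct HU as [O [HO [Ox HOU]]].
    destruct (HC' (fun w => O (mul w x))) as [A [FA SA]].
    { exists (fun w => O (mul w x)). split. apply trans_open; auto.
      split. rewrite (g_1l HG). auto. auto. }
    apply (proj1 (proj2 (proj2 HF')) A); auto.
    intros y Ay. apply HOU. pose proof (SA x y (nbhd_pt (Hsub A FA)) Ay) as H.
    cbv beta in H. rewrite <- (g_assoc HG), (g_Vl HG), (g_1r HG) in H. exact H.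
Qed.

Lemma mc_eq (g : gops) (tau : set (set g)) (F F' : filt g) :
  min_cauchy tau F -> min_cauchy tau F' ->
  (forall W, nbhd tau (one g) W -> compl_ent W F F') -> feq F F'.
Proof.
  intros [[HF HC] HmF] [[HF' HC'] HmF'] Hce.
  set (H := fun U => F U /\ F' U).
  assert (HH : cauchy tau H).
  { split. split; [|split; [|split]].
    - split; apply HF || apply HF'.
    - intros [h _]. apply HF; exact h.
    - intros U V [h1 h2] HUV. split. apply (proj1 (proj2 (proj2 HF)) U); auto.
      apply (proj1 (proj2 (proj2 HF')) U); auto.
    - intros U V [h1 h2] [h3 h4]. split. apply HF; auto. apply HF'; auto.
    - intros W HW. destruct (Hce W HW) as [A [? [? ?]]]. exists A. split; [split|]; auto. }
  intro U. split; intro HU.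
  - apply (HmF H HH (fun U h => proj1 h) U HU).
  - apply (HmF' H HH (fun U h => proj2 h) U HU).
Qed.

Lemma sig_eq (X : Type) (P : X -> Prop) (a b : {x | P x}) : proj1_sig a = proj1_sig b -> a = b.
Proof. destruct a, b; simpl. intro; subst. f_equal. apply proof_irrelevance. Qed.

Lemma sub_group (g : gops) (HG : is_group g) (H : set g) (HH : is_subgroup H) :
  is_group (sub_gops HH).
Proof.
  split; [|split]; intros; apply sig_eq; simpl; apply HG.
Qed.

Lemma sub_group_top (g : gops) (H : set g) (HH : is_subgroup H) (tau : set (set g)) :
  is_group_topology tau -> is_group_topology (@sub_top g H HH tau).
Proof.
  intros [[Htop [Hun Hint]] [Hmul Hinv]]. split; [split; [|split]|split].
  - exists (fun _ => True). split; auto. split; auto.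
  - intros I U HU.
    set (K := {i : I & {O : set g | tau O /\ forall x : sub_gops HH, U i x <-> O (proj1_sig x)}}).
    exists (fun y => exists k : K, proj1_sig (projT2 k) y). split.
    + apply Hun. intro k. destruct k as [i [O HO]]. simpl. apply HO.
    + intro x. split.
      * intros [i Hi]. destruct (HU i) as [O [HO HOi]].
        exists (existT _ i (exist (fun O => tau O /\ forall x : sub_gops HH, U i x <-> O (proj1_sig x)) O (conj HO HOi))).
        simpl. apply HOi. exact Hi.
      * intros [[i [O [HO HOi]]] Hk]. simpl in Hk. exists i. apply HOi. exact Hk.
  - intros U V [O1 [H1 E1]] [O2 [H2 E2]]. exists (fun y => O1 y /\ O2 y). split.
    apply Hint; auto. intro x. rewrite E1, E2. tauto.
  - intros x y P [O [HO E]] Pxy. apply E in Pxy. simpl in Pxy.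
    destruct (Hmul _ _ O HO Pxy) as [U [V [HU [HV [Ux [Vy HUV]]]]]].
    exists (fun b : sub_gops HH => U (proj1_sig b)), (fun b : sub_gops HH => V (proj1_sig b)).
    split. exists U. split; auto. tauto.
    split. exists V. split; auto. tauto.
    split; auto. split; auto. intros u v Hu Hv. apply E. simpl. auto.
  - intros x P [O [HO E]] Px. apply E in Px. simpl in Px.
    destruct (Hinv _ O HO Px) as [U [HU [Ux HU']]].
    exists (fun b : sub_gops HH => U (proj1_sig b)). split. exists U. split; auto. tauto.
    split; auto. intros u Hu. apply E. simpl. auto.
Qed.

Lemma lift_nbhd (g : gops) (H : set g) (HH : is_subgroup H) (tau : set (set g)) W :
  nbhd tau (one g) W -> nbhd (@sub_top g H HH tau) (one (sub_gops HH)) (fun b => W (proj1_sig b)).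
Proof.
  intros [O [HO [O1 HOW]]]. exists (fun b : sub_gops HH => O (proj1_sig b)).
  split. exists O. split; auto. tauto. simpl. split; auto.
Qed.

Lemma unlift_nbhd (g : gops) (H : set g) (HH : is_subgroup H) (tau : set (set g)) x P :
  nbhd (@sub_top g H HH tau) x P ->
  exists O, tau O /\ O (proj1_sig x) /\ forall b, O (proj1_sig b) -> P b.
Proof.
  intros [Q [[O [HO E]] [Qx HQ]]]. exists O. split; auto. split. apply E; auto.
  intros b Hb. apply HQ. apply E. auto.
Qed.

Lemma mc_filter (g : gops) (tau : set (set g)) F : min_cauchy tau F -> is_filter F.
Proof. intros [[? ?] ?]. auto. Qed.

Lemma ce_mono (g : gops) (V V' : set g) F F' :
  compl_ent V F F' -> (forall x, V x -> V' x) -> compl_ent V' F F'.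
Proof. intros [A [K1 [K2 SA]]] HV. exists A. split; auto. split; auto. intros x y Hx Hy. apply HV, SA; auto. Qed.

Lemma lift_nbhd_gen (g : gops) (H : set g) (HH : is_subgroup H) (tau : set (set g)) b C :
  nbhd tau (proj1_sig b) C -> nbhd (@sub_top g H HH tau) b (fun b => C (proj1_sig b)).
Proof.
  intros [O [HO [Ob HOC]]]. exists (fun b : sub_gops HH => O (proj1_sig b)).
  split. exists O. split; auto. tauto. split; auto.
Qed.

Lemma unlift_nbhd2 (g : gops) (H : set g) (HH : is_subgroup H) (tau : set (set g)) b C :
  is_group_topology tau -> tau H ->
  nbhd (@sub_top g H HH tau) b C -> nbhd tau (proj1_sig b) (fun y => exists h : H y, C (exist _ y h)).
Proof.
  intros Ht HHo Hn. destruct (unlift_nbhd Hn) as [O [HO [Ob HOC]]].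
  exists (fun y => O y /\ H y). split. apply Ht; auto. split. split; auto. apply (proj2_sig b).
  intros y [Oy hy]. exists hy. apply (HOC (exist _ y hy)). exact Oy.
Qed.

Lemma trace_mc (g : gops) (H : set g) (HH : is_subgroup H) (tau : set (set g)) (F : filt g) :
  min_cauchy tau F -> F H ->
  min_cauchy (@sub_top g H HH tau) (fun P => F (fun x => exists h : H x, P (exist _ x h))).
Proof.
  intros [[[Ftop [Fbot [Fm Fi]]] HC] Hmin] FH.
  assert (HF: is_filter (fun P : set (sub_gops HH) => F (fun x => exists h : H x, P (exist _ x h)))).
  { split; [|split; [|split]].
    - apply (Fm H); auto. intros x hx. exists hx. exact I.
    - intro Hb. apply Fbot. apply (Fm _ _ Hb). intros x [h f]. exact f.
    - intros U V HU HUV. apply (Fm _ _ HU). intros x [h Hu]. exists h. auto.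
    - intros U V HU HV. apply (Fm _ _ (Fi _ _ HU HV)). intros x [[h1 K1] [h2 K2]].
      exists h1. split; auto. rewrite (proof_irrelevance _ h1 h2). auto. }
  split. split. exact HF.
  - intros V HV. destruct (unlift_nbhd HV) as [O [HO [O1 HOV]]].
    destruct (HC O) as [A [FA SA]].
    { exists O. split; auto. }
    exists (fun b : sub_gops HH => A (proj1_sig b)). split.
    + apply (Fm _ _ (Fi _ _ FA FH)). intros x [Ax hx]. exists hx. exact Ax.
    + intros b1 b2 A1 A2. apply HOV. exact (SA _ _ A1 A2).
  - intros F' [HF' HC'] Hsub.
    set (PF := fun U : set g => F' (fun b : sub_gops HH => U (proj1_sig b))).
    assert (HPF : cauchy tau PF).
    { destruct HF' as [F'top [F'bot [F'm F'i]]]. split. split; [|split; [|split]].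
      - unfold PF. apply (F'm _ _ F'top). auto.
      - unfold PF. intro Hb. apply F'bot. exact Hb.
      - unfold PF. intros U V HU HUV. apply (F'm _ _ HU). auto.
      - unfold PF. intros U V HU HV. exact (F'i _ _ HU HV).
      - intros V HV. destruct (HC' _ (lift_nbhd HH HV)) as [A [FA SA]].
        exists (fun y => exists h : H y, A (exist _ y h)). split.
        + unfold PF. apply (F'm _ _ FA). intros [y h] Ay. exists h. exact Ay.
        + intros y1 y2 [h1 A1] [h2 A2]. exact (SA _ _ A1 A2). }
    assert (Hle : forall U, PF U -> F U).
    { intros U HU. apply Hsub in HU. apply (Fm _ _ HU). intros x [h Hx]. exact Hx. }
    intros U HU. apply (Hmin PF HPF Hle) in HU. unfold PF in HU.
    apply (proj1 (proj2 (proj2 HF')) _ _ HU).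
    intros [y h] [h' Hy]. simpl in Hy. rewrite (proof_irrelevance _ h h'). exact Hy.
Qed.

Theorem corollary1p3 (G : gops) (HG : is_group G) (B N : set G)
  (HBN : BN_pair B N) (HB : @is_subgroup G B)
  (S T : set (set G)) (HS : is_group_topology S) (HT : is_group_topology T)
  (HST : forall U, S U -> T U) (HBopen : S B)
  (phi : filt G -> filt G)
  (psi : filt (sub_gops HB) -> filt (sub_gops HB))
  (j : filt (sub_gops HB) -> filt G)
  (Hphi : is_cont_ext T S (fun x : G => x) phi)
  (Hpsi : is_cont_ext (@sub_top G B HB T) (@sub_top G B HB S)
            (fun x : sub_gops HB => x) psi)
  (Hj : is_cont_ext (@sub_top G B HB T) T (fun x : sub_gops HB => proj1_sig x) j) :
  forall F : filt G,
    ker T S phi F <->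
    exists FB, ker (@sub_top G B HB T) (@sub_top G B HB S) psi FB /\ feq (j FB) F.
Proof.
  intro F.
  pose proof (sub_group HG HB) as HGB.
  pose proof (sub_group_top HB HT) as HTB.
  pose proof (sub_group_top HB HS) as HSB.
  destruct Hphi as [Phi1 [Phi2 Phi3]]. destruct Hpsi as [Psi1 [Psi2 Psi3]].
  destruct Hj as [J1 [J2 J3]].
  assert (NB : nbhd S (one G) B).
  { exists B. split; auto. split; auto. apply HB. }
  split.
  - intros [HF Hker].
    assert (FB_ : F B).
    { destruct (Phi2 F HF B NB) as [V [HV HVc]].
      destruct (approx HG HT (proj1 HF) HV) as [A [FA HA]].
      apply (proj1 (proj2 (proj2 (mc_filter HF))) A); auto.
      intros x Ax.
      pose proof (HVc (nbhd T x) (nbhd_mc HG HT x) (HA x Ax)) as Hc.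
      rewrite (feq_eq Hker), (feq_eq (Phi3 x)) in Hc.
      destruct Hc as [C [C1 [Cx SC]]].
      pose proof (SC _ _ (nbhd_pt C1) (nbhd_pt Cx)) as Hb.
      rewrite (g_inv1 HG), (g_1r HG) in Hb. exact Hb. }
    pose proof (trace_mc HB HF FB_) as HFB.
    set (FB := fun P : set (sub_gops HB) => F (fun x => exists h : B x, P (exist _ x h))) in *.
    exists FB. split; [split; [exact HFB|]|].
    +
      apply (mc_eq (Psi1 FB HFB) (nbhd_mc HGB HSB _)).
      intros W HW. destruct (nbhd_mul HGB HSB HW) as [W' [HW' HWW]].
      destruct (Psi2 FB HFB W' HW') as [V [HV HVc]].
      destruct (approx HGB HTB (proj1 HFB) HV) as [A [FA HA]].
      destruct (unlift_nbhd HW') as [O [HO [O1 HOW]]].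
      assert (NQ : nbhd S (one G) (fun y => O y /\ B y)).
      { exists (fun y => O y /\ B y). split. apply HS; auto. split; auto. split; auto. apply HB. }
      destruct (Phi2 F HF _ NQ) as [V2 [HV2 HV2c]].
      destruct (approx HG HT (proj1 HF) HV2) as [A2 [FA2 HA2]].
      destruct (filter_ne (mc_filter HF) (proj2 (proj2 (proj2 (mc_filter HF))) _ _ FA FA2))
        as [x [[h Axh] A2x]].
      set (b := exist B x h : sub_gops HB).
      assert (c1 : compl_ent W' (psi FB) (nbhd (sub_top S) b)).
      { rewrite <- (feq_eq (Psi3 b)). apply HVc. apply nbhd_mc; auto. apply HA. exact Axh. }
      assert (c2 := HV2c (nbhd T x) (nbhd_mc HG HT x) (HA2 x A2x)).
      rewrite (feq_eq Hker), (feq_eq (Phi3 x)) in c2.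
      destruct c2 as [C [C1 [Cx SC]]].
      assert (c3 : compl_ent W' (nbhd (sub_top S) b) (nbhd (sub_top S) (one (sub_gops HB)))).
      { exists (fun b => C (proj1_sig b)). split; [|split].
        - apply lift_nbhd_gen. exact Cx.
        - apply lift_nbhd_gen. exact C1.
        - intros b1 b2 B1 B2. apply HOW. exact (proj1 (SC _ _ B1 B2)). }
      exact (ce_trans HGB (nbhd_pt HW') HWW (mc_filter (Psi1 FB HFB))
        (mc_filter (nbhd_mc HGB HSB _)) (mc_filter (nbhd_mc HGB HSB _)) c1 c3).
    +
      apply (mc_eq (J1 FB HFB) HF).
      intros W HW. destruct (nbhd_mul HG HT HW) as [W' [HW' HWW]].
      destruct (J2 FB HFB W' HW') as [V [HV HVc]].
      destruct (approx HGB HTB (proj1 HFB) HV) as [A [FA HA]].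
      destruct (approx HG HT (proj1 HF) HW') as [A2 [FA2 HA2]].
      destruct (filter_ne (mc_filter HF) (proj2 (proj2 (proj2 (mc_filter HF))) _ _ FA FA2))
        as [x [[h Axh] A2x]].
      set (b := exist B x h : sub_gops HB).
      assert (c1 : compl_ent W' (j FB) (nbhd T x)).
      { change x with (proj1_sig b). rewrite <- (feq_eq (J3 b)). apply HVc. apply nbhd_mc; auto.
        apply HA. exact Axh. }
      assert (c2 := ce_sym (HA2 x A2x)).
      exact (ce_trans HG (nbhd_pt HW') HWW (mc_filter (J1 FB HFB))
        (mc_filter (nbhd_mc HG HT _)) (mc_filter HF) c1 c2).
  - intros [FB [[HFB Hker] Hjf]].
    rewrite <- (feq_eq Hjf). split. exact (J1 FB HFB).
    apply (mc_eq (Phi1 _ (J1 FB HFB)) (nbhd_mc HG HS _)).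
    intros W HW. destruct (nbhd_mul HG HS HW) as [W' [HW' HWW]].
    destruct (Phi2 _ (J1 FB HFB) W' HW') as [V [HV HVc]].
    destruct (J2 FB HFB V HV) as [V3 [HV3 HV3c]].
    destruct (Psi2 FB HFB _ (lift_nbhd HB HW')) as [V4 [HV4 HV4c]].
    destruct (approx HGB HTB (proj1 HFB) (nbhd_inter HTB HV3 HV4)) as [A [FA HA]].
    destruct (filter_ne (mc_filter HFB) FA) as [b Ab].
    assert (cb := HA b Ab).
    assert (c1 : compl_ent V (j FB) (nbhd T (proj1_sig b))).
    { rewrite <- (feq_eq (J3 b)). apply HV3c. apply nbhd_mc; auto.
      apply (ce_mono cb). intros y [? ?]; auto. }
    assert (c2 : compl_ent W' (phi (j FB)) (nbhd S (proj1_sig b))).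
    { rewrite <- (feq_eq (Phi3 (proj1_sig b))). apply HVc. apply nbhd_mc; auto. exact c1. }
    assert (c3 : compl_ent (fun b0 : sub_gops HB => W' (proj1_sig b0)) (psi FB) (psi (nbhd (sub_top T) b))).
    { apply HV4c. apply nbhd_mc; auto. apply (ce_mono cb). intros y [? ?]; auto. }
    rewrite (feq_eq Hker), (feq_eq (Psi3 b)) in c3.
    destruct c3 as [C [C1 [Cb SC]]].
    assert (c4 : compl_ent W' (nbhd S (proj1_sig b)) (nbhd S (one G))).
    { exists (fun y => exists h : B y, C (exist _ y h)). split; [|split].
      - apply unlift_nbhd2; auto.
      - apply (unlift_nbhd2 (b := one (sub_gops HB))); auto.
      - intros y1 y2 [h1 K1] [h2 K2]. exact (SC _ _ K1 K2). }
    exact (ce_trans HG (nbhd_pt HW') HWW (mc_filter (Phi1 _ (J1 FB HFB)))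
        (mc_filter (nbhd_mc HG HS _)) (mc_filter (nbhd_mc HG HS _)) c2 c4).
Qed.
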